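(* For every $j\in\mathbb Z$: (1) Every nontrivial coset of $\Phi^{j-1}_*\mathcal R$ is contained in $\{(x,y)\in\mathbb R^2: x\in m^{-j}\mathbb Z\setminus m^{-(j-1)}\mathbb Z\}$, and any two points of the same coset lie in a vertical edge path of $Y_j$ of combinatorial length at most $2$. (2) Every coset of $\mathcal R_j$ is contained in an orbit of the translation action of $m^{-j}\mathbb Z\times m_v^{-j}\mathbb Z$ on $\mathbb R^2$. (3) Let $\bar{\mathcal R}_{j+1}$ be the equivalence relation on $X_j$ generated by the pushforward $(\hat\pi^j\circ\Phi^j)_*\mathcal R$. Then the cosets of $\bar{\mathcal R}_{j+1}$ are exactly the fibers of $\pi_j:X_j\to X_{j+1}$. (4) For $i=0,1$ let $\hat\sigma_i$ be a cell of $Y_j$ and $\hat p_i$ an interior point of $\hat\sigma_i$. If $\hat p_0\sim_{\mathcal R_j}\hat p_1$, then there is a translation $t\in m^{-j}\mathbb Z\times m_v^{-j}\mathbb Z$ with $t(\hat\sigma_0)=\hat\sigma_1$ and $\hat q\sim_{\mathcal R_j}t(\hat q)$ for all $\hat q\in\hat\sigma_0$.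
   Context: Standing construction ($n=2$). Fix an integer $L\ge100$, $m=4$, $m_v=3L$. For $j\in\mathbb Z$, $Y_j$ is the cell complex on $\mathbb R^2$ given by the tiling by rectangles $[am^{-j},(a+1)m^{-j}]\times[bm_v^{-j},(b+1)m_v^{-j}]$, $a,b\in\mathbb Z$; a $1$-cell of $Y_j$ is horizontal if it is a translate of $[0,m^{-j}]\times\{0\}$ and vertical if it is a translate of $\{0\}\times[0,m_v^{-j}]$. Let $\Phi(x,y)=(m^{-1}x,m_v^{-1}y)$. For $k,\ell\in\mathbb Z$, $i\in\{1,2,3\}$, let $a_{k,\ell,i}=\{k+\tfrac i4\}\times[(3\ell+i-1)m_v^{-1},(3\ell+i)m_v^{-1}]$. $\mathcal R$ is the equivalence relation on $\mathbb R^2$ generated by $p\sim p+(0,m_v^{-1})$ for $p\in a_{k,\ell,i}$ (all $k,\ell,i$). For $j\in\mathbb Z$, $\Phi^j_*\mathcal R=\{(\Phi^jp,\Phi^jq):(p,q)\in\mathcal R\}$; $\mathcal R_j$ is the equivalence relation generated by $\Phi^i_*\mathcal R$ for all integers $i<j$, and $\mathcal R_\infty$ the one generated by all $\Phi^i_*\mathcal R$, $i\in\mathbb Z$. For $j\in\mathbb Z\cup\{\infty\}$, $X_j=\mathbb R^2/\mathcal R_j$ with the quotient topology, $\hat\pi^j:\mathbb R^2\to X_j$ the quotient map; for $i\le j$, $\pi_i^j:X_i\to X_j$ is the induced map, and $\pi_j=\pi_j^{j+1}$. *)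

(* Defs.v *)
From Stdlib Require Import Reals Lra Lia ZArith Relations.
Open Scope R_scope.

Definition pt := (R * R)%type.

(* m = 4, m_v = 3L *)
Definition mh : R := 4.
Definition mv (L : nat) : R := 3 * INR L.

Definition sh (j : Z) : R := powerRZ mh (- j).
Definition sv (L : nat) (j : Z) : R := powerRZ (mv L) (- j).

Definition Phi (L : nat) (j : Z) (p : pt) : pt := (sh j * fst p, sv L j * snd p).

Definition in_a (L : nat) (k l i : Z) (p : pt) : Prop :=
  fst p = IZR k + IZR i / 4 /\
  IZR (3 * l + i - 1) / mv L <= snd p <= IZR (3 * l + i) / mv L.

Definition gen0 (L : nat) (p q : pt) : Prop :=
  exists k l i : Z, (1 <= i <= 3)%Z /\ in_a L k l i p /\
    q = (fst p, snd p + / mv L).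

Definition Rel (L : nat) : relation pt := clos_refl_sym_trans pt (gen0 L).

Definition PhiRel (L : nat) (j : Z) (p q : pt) : Prop :=
  exists p0 q0, Rel L p0 q0 /\ p = Phi L j p0 /\ q = Phi L j q0.

Definition Rj (L : nat) (j : Z) : relation pt :=
  clos_refl_sym_trans pt (fun p q => exists i : Z, (i < j)%Z /\ PhiRel L i p q).

(* X_j = R^2 / R_j ; points of X_j are represented as the R_j-classes
   (predicates on R^2); hat pi^j sends p to its class. *)
Definition Xpt := pt -> Prop.
Definition pihat (L : nat) (j : Z) (p : pt) : Xpt := fun q => Rj L j p q.

(* the induced map pi_j : X_j -> X_{j+1} : a class is sent to the
   R_{j+1}-saturation of it (which is the R_{j+1}-class of any representative) *)
Definition pi (L : nat) (j : Z) (S : Xpt) : Xpt :=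
  fun q => exists p, S p /\ Rj L (j + 1) p q.

Definition Rbar (L : nat) (j : Z) : relation Xpt :=
  clos_refl_sym_trans Xpt (fun x y => exists p q, Rel L p q /\
      x = pihat L j (Phi L j p) /\ y = pihat L j (Phi L j q)).

Inductive ckind := C0 | CH | CV | C2.
Record cell := mkCell { ck : ckind; ca : Z; cb : Z }.

Definition in_cell (L : nat) (j : Z) (s : cell) (p : pt) : Prop :=
  let u := sh j in let v := sv L j in
  let x := fst p in let y := snd p in
  let a := IZR (ca s) in let b := IZR (cb s) in
  match ck s with
  | C0 => x = a * u /\ y = b * v
  | CH => a * u <= x <= (a + 1) * u /\ y = b * v
  | CV => x = a * u /\ b * v <= y <= (b + 1) * v
  | C2 => a * u <= x <= (a + 1) * u /\ b * v <= y <= (b + 1) * v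
  end.

(* interior points (relative interior; a 0-cell is its own interior) *)
Definition in_cell_interior (L : nat) (j : Z) (s : cell) (p : pt) : Prop :=
  let u := sh j in let v := sv L j in
  let x := fst p in let y := snd p in
  let a := IZR (ca s) in let b := IZR (cb s) in
  match ck s with
  | C0 => x = a * u /\ y = b * v
  | CH => a * u < x < (a + 1) * u /\ y = b * v
  | CV => x = a * u /\ b * v < y < (b + 1) * v
  | C2 => a * u < x < (a + 1) * u /\ b * v < y < (b + 1) * v
  end.

Definition translate (t p : pt) : pt := (fst p + fst t, snd p + snd t).

(* A vertical edge path of Y_j of combinatorial length n: vertices
   (a m^{-j}, f k m_v^{-j}), k = 0..n, consecutive ones joined by a vertical
   1-cell (|f (k+1) - f k| = 1). *)
Definition vpath (f : nat -> Z) (n : nat) : Prop :=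
  forall k : nat, (k < n)%nat -> Z.abs (f (S k) - f k) = 1%Z.

Definition on_vpath (L : nat) (j : Z) (a : Z) (f : nat -> Z) (n : nat) (p : pt) : Prop :=
  (exists k : nat, (k <= n)%nat /\ in_cell L j (mkCell C0 a (f k)) p) \/
  (exists k : nat, (k < n)%nat /\ in_cell L j (mkCell CV a (Z.min (f k) (f (S k)))) p).

Definition x_cond (j : Z) (x : R) : Prop :=
  (exists a : Z, x = IZR a * sh j) /\ ~ (exists b : Z, x = IZR b * sh (j - 1)).

(* Main.v *)
Require Import Defs.
From Stdlib Require Import Reals Lra Lia ZArith Relations FunctionalExtensionality PropExtensionality.
Open Scope R_scope.

Lemma IZR_pow (z k : Z) : (0 <= k)%Z -> IZR (z ^ k) = powerRZ (IZR z) k.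
Proof.
  intros Hk. rewrite <- (Z2Nat.id k Hk).
  rewrite <- pow_IZR, pow_powerRZ. reflexivity.
Qed.

Lemma pow_pos_Z (z k : Z) : (0 < z)%Z -> (0 <= k)%Z -> (0 < z ^ k)%Z.
Proof. intros; apply Z.pow_pos_nonneg; lia. Qed.

Lemma mv_IZR L : mv L = IZR (3 * Z.of_nat L).
Proof. unfold mv. rewrite mult_IZR, <- INR_IZR_INZ. reflexivity. Qed.

Lemma mv_pos L : (1 <= L)%nat -> 0 < mv L.
Proof. intros. unfold mv. apply lt_0_INR in H. lra. Qed.

Lemma sh_pos j : 0 < sh j.
Proof. unfold sh, mh. apply powerRZ_lt. lra. Qed.

Lemma sv_pos L j : (1 <= L)%nat -> 0 < sv L j.
Proof. intros. unfold sv. apply powerRZ_lt. apply mv_pos; auto. Qed.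

Lemma pRZ_split (x : R) (i j : Z) : x <> 0 -> (i < j)%Z ->
  powerRZ x (- i) = powerRZ x (-j) * x * powerRZ x (j - i - 1).
Proof.
  intros Hx Hij.
  replace (- i)%Z with ((- j + 1) + (j - i - 1))%Z by lia.
  rewrite !powerRZ_add by auto. simpl. ring.
Qed.

Lemma sh_split i j : (i < j)%Z -> sh i = sh j * 4 * IZR (4 ^ (j - i - 1)).
Proof.
  intros Hij. unfold sh, mh. rewrite (pRZ_split 4 i j) by (lra || lia).
  rewrite IZR_pow by lia. simpl. ring.
Qed.

Lemma sv_split L i j : (1 <= L)%nat -> (i < j)%Z ->
  sv L i = sv L j * mv L * IZR ((3 * Z.of_nat L) ^ (j - i - 1)).
Proof.
  intros HL Hij. unfold sv. pose proof (mv_pos L HL).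
  rewrite (pRZ_split (mv L) i j) by (lra || lia).
  rewrite IZR_pow by lia. rewrite <- mv_IZR. simpl. ring.
Qed.

Lemma sh_pred j : sh (j - 1) = 4 * sh j.
Proof.
  unfold sh, mh. replace (- (j - 1))%Z with (1 + - j)%Z by lia.
  rewrite powerRZ_add by lra. simpl. ring.
Qed.

Lemma sv_pred L j : (1 <= L)%nat -> sv L (j - 1) = mv L * sv L j.
Proof.
  intros HL. pose proof (mv_pos L HL). unfold sv. replace (- (j - 1))%Z with (1 + - j)%Z by lia.
  rewrite powerRZ_add by lra. simpl. ring.
Qed.

Definition Blk L (p q : pt) : Prop :=
  exists k l i : Z, (1 <= i <= 3)%Z /\ fst p = IZR k + IZR i / 4 /\ fst q = fst p /\
   IZR (3*l+i-1) <= mv L * snd p <= IZR (3*l+i+1) /\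
   IZR (3*l+i-1) <= mv L * snd q <= IZR (3*l+i+1) /\
   exists d : Z, mv L * snd q = mv L * snd p + IZR d.

Lemma blk_uniq k l i k' l' i' x Y :
  (1 <= i <= 3)%Z -> (1 <= i' <= 3)%Z ->
  x = IZR k + IZR i / 4 -> x = IZR k' + IZR i' / 4 ->
  IZR (3*l+i-1) <= Y <= IZR (3*l+i+1) ->
  IZR (3*l'+i'-1) <= Y <= IZR (3*l'+i'+1) -> k = k' /\ l = l' /\ i = i'.
Proof.
  intros Hi Hi' Hx Hx' HY HY'.
  assert (E : IZR (4*k+i) = IZR (4*k'+i')).
  { rewrite !plus_IZR, !mult_IZR. simpl. lra. }
  apply eq_IZR in E.
  assert (k = k' /\ i = i') as [-> ->] by lia.
  assert (A1 : IZR (3*l+i'-1) <= IZR (3*l'+i'+1)) by lra.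
  assert (A2 : IZR (3*l'+i'-1) <= IZR (3*l+i'+1)) by lra.
  apply le_IZR in A1. apply le_IZR in A2. lia.
Qed.

Lemma le_div_iff a m y : 0 < m -> (a / m <= y <-> a <= m * y).
Proof.
  intros Hm. split; intros H.
  - apply Rmult_le_compat_l with (r := m) in H; [|lra].
    replace (m * (a / m)) with a in H by (field; lra). exact H.
  - apply Rmult_le_reg_l with m; auto. replace (m * (a / m)) with a by (field; lra). exact H.
Qed.

Lemma div_le_iff a m y : 0 < m -> (y <= a / m <-> m * y <= a).
Proof.
  intros Hm. split; intros H.
  - apply Rmult_le_compat_l with (r := m) in H; [|lra].
    replace (m * (a / m)) with a in H by (field; lra). exact H.
  - apply Rmult_le_reg_l with m; auto. replace (m * (a / m)) with a by (field; lra). exact H.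
Qed.

Lemma Rel_inv L (HL : (1 <= L)%nat) p q : Rel L p q -> p = q \/ Blk L p q.
Proof.
  pose proof (mv_pos L HL) as Hm.
  induction 1 as [p q H | p | p q H IH | p q r H1 IH1 H2 IH2].
  - right. destruct H as (k & l & i & Hi & [Hx Hy] & ->).
    exists k, l, i. cbn [fst snd]. rewrite le_div_iff in Hy by auto. rewrite div_le_iff in Hy by auto.
    rewrite ?plus_IZR, ?minus_IZR, ?mult_IZR in *.
    repeat match goal with |- _ /\ _ => split end; try lia; try lra.
    + replace (mv L * (snd p + / mv L)) with (mv L * snd p + 1) by (field; lra). lra.
    + replace (mv L * (snd p + / mv L)) with (mv L * snd p + 1) by (field; lra). lra.
    + exists 1%Z. field. lra.
  - left; reflexivity.
  - destruct IH as [-> | (k & l & i & Hi & Hx & Hx2 & Hp & Hq & d & Hd)]; [left; reflexivity|].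
    right. exists k, l, i. repeat match goal with |- _ /\ _ => split end; try lia; try lra. exists (- d)%Z. rewrite opp_IZR. lra.
  - destruct IH1 as [-> | B1]; [exact IH2|].
    destruct IH2 as [<- | B2]; [right; exact B1|].
    destruct B1 as (k & l & i & Hi & Hx & Hx2 & Hp & Hq & d & Hd).
    destruct B2 as (k' & l' & i' & Hi' & Hx' & Hx2' & Hp' & Hq' & d' & Hd').
    destruct (blk_uniq k l i k' l' i' (fst q) (mv L * snd q)) as (-> & -> & ->); auto; try lra.
    right. exists k', l', i'. repeat match goal with |- _ /\ _ => split end; try lia; try lra. exists (d + d')%Z. rewrite plus_IZR. lra.
Qed.

Lemma pt_eq (p q : pt) : fst p = fst q -> snd p = snd q -> p = q.
Proof. destruct p, q; simpl; intros -> ->; reflexivity. Qed.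

Definition InvJ L j (p q : pt) : Prop :=
  fst q = fst p /\ (exists B : Z, snd q = snd p + IZR B * sv L j) /\
  (q = p \/ exists a : Z, fst p = IZR a * sh j).

Lemma gen_inv L (HL : (1 <= L)%nat) j p q :
  (exists i : Z, (i < j)%Z /\ PhiRel L i p q) -> InvJ L j p q.
Proof.
  intros (i & Hij & p0 & q0 & HR & -> & ->).
  destruct (Rel_inv L HL _ _ HR) as [<- | (k & l & i' & Hi & Hx & Hx2 & Hp & Hq & d & Hd)].
  - split; [reflexivity|]. split; [exists 0%Z; simpl; ring | left; reflexivity].
  - unfold Phi; cbn [fst snd]. split; [rewrite Hx2; reflexivity|]. split.
    + exists ((3 * Z.of_nat L) ^ (j - i - 1) * d)%Z.
      rewrite (sv_split L i j) by auto. rewrite mult_IZR.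
      replace (sv L j * mv L * IZR ((3 * Z.of_nat L) ^ (j - i - 1)) * snd q0)
        with (sv L j * IZR ((3 * Z.of_nat L) ^ (j - i - 1)) * (mv L * snd q0)) by ring.
      rewrite Hd. cbn [fst snd]. ring.
    + right. exists (4 ^ (j - i - 1) * (4 * k + i'))%Z.
      rewrite (sh_split i j) by auto. rewrite Hx, !mult_IZR, plus_IZR, mult_IZR. cbn [fst snd]. field.
Qed.

Lemma Rj_inv L (HL : (1 <= L)%nat) j p q : Rj L j p q -> InvJ L j p q.
Proof.
  induction 1 as [p q H | p | p q H IH | p q r H1 IH1 H2 IH2].
  - apply gen_inv; auto.
  - split; [reflexivity|]. split; [exists 0%Z; simpl; ring | left; reflexivity].
  - destruct IH as (Hx & (B & HB) & Ho). split; [auto|]. split.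
    + exists (- B)%Z. rewrite opp_IZR. lra.
    + destruct Ho as [-> | (a & Ha)]; [left; reflexivity | right; exists a; congruence].
  - destruct IH1 as (Hx & (B & HB) & Ho). destruct IH2 as (Hx' & (B' & HB') & Ho').
    split; [congruence|]. split.
    + exists (B + B')%Z. rewrite plus_IZR. lra.
    + destruct Ho as [-> | (a & Ha)]; [| right; exists a; auto].
      destruct Ho' as [-> | (a & Ha)]; [left; reflexivity | right; exists a; congruence].
Qed.

Lemma part2 L (HL : (1 <= L)%nat) j : forall p q : pt, Rj L j p q ->
     exists a b : Z, q = translate (IZR a * sh j, IZR b * sv L j) p.
Proof.
  intros p q H. destruct (Rj_inv L HL j p q H) as (Hx & (B & HB) & _).
  exists 0%Z, B. unfold translate. apply pt_eq; cbn [fst snd]; [rewrite Hx; simpl; ring | exact HB].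
Qed.

Lemma part1 L (HL : (1 <= L)%nat) j : forall p q : pt, PhiRel L (j - 1) p q -> p <> q ->
     x_cond j (fst p) /\
     exists (a : Z) (f : nat -> Z) (n : nat), (n <= 2)%nat /\ vpath f n /\
       on_vpath L j a f n p /\ on_vpath L j a f n q.
Proof.
  intros p q (p0 & q0 & HR & -> & ->) Hne.
  pose proof (sv_pos L j HL) as Hv. pose proof (sh_pos j) as Hu.
  destruct (Rel_inv L HL _ _ HR) as [<- | (k & l & i & Hi & Hx & Hx2 & Hp & Hq & d & Hd)];
    [exfalso; apply Hne; reflexivity|].
  unfold Phi; cbn [fst snd].
  assert (Ex : sh (j - 1) * fst p0 = IZR (4 * k + i) * sh j).
  { rewrite sh_pred, Hx, plus_IZR, mult_IZR. field. }
  split.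
  - split; [exists (4 * k + i)%Z; exact Ex|].
    intros (b & Hb). rewrite Ex, sh_pred in Hb.
    assert (E : IZR (4 * k + i) = IZR (4 * b)).
    { rewrite mult_IZR. apply Rmult_eq_reg_r with (sh j); [|lra]. lra. }
    apply eq_IZR in E. lia.
  - exists (4 * k + i)%Z, (fun n => (3 * l + i - 1 + Z.of_nat n)%Z), 2%nat.
    split; [lia|]. split.
    { intros n _. rewrite Nat2Z.inj_succ. lia. }
    assert (Hon : forall r0, fst r0 = fst p0 ->
       IZR (3*l+i-1) <= mv L * snd r0 <= IZR (3*l+i+1) ->
       on_vpath L j (4 * k + i) (fun n => (3 * l + i - 1 + Z.of_nat n)%Z) 2
         (sh (j - 1) * fst r0, sv L (j - 1) * snd r0)).
    { intros r0 Hr Hy. right. rewrite sv_pred by auto.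
      set (Y := mv L * snd r0) in *.
      replace (mv L * sv L j * snd r0) with (sv L j * Y) by (unfold Y; ring).
      rewrite Hr, Ex.
      destruct (Rle_lt_dec Y (IZR (3*l+i-1) + 1)) as [Hle | Hlt].
      - exists 0%nat. split; [lia|]. unfold in_cell. cbn [ck ca cb fst snd].
        replace (Z.min (3 * l + i - 1 + Z.of_nat 0) (3 * l + i - 1 + Z.of_nat 1))
          with (3 * l + i - 1)%Z by lia.
        split; [reflexivity|]. split; nra.
      - exists 1%nat. split; [lia|]. unfold in_cell. cbn [ck ca cb fst snd].
        replace (Z.min (3 * l + i - 1 + Z.of_nat 1) (3 * l + i - 1 + Z.of_nat 2))
          with (3 * l + i - 1 + 1)%Z by lia.
        split; [reflexivity|]. rewrite plus_IZR.
        assert (IZR (3 * l + i + 1) = IZR (3 * l + i - 1) + 1 + 1) by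
          (rewrite <- !plus_IZR; f_equal; lia).
        split; nra. }
    split; apply Hon; auto.
Qed.

Lemma Rj_mono L j p q : Rj L j p q -> Rj L (j + 1) p q.
Proof.
  induction 1.
  - apply rst_step. destruct H as (i & Hi & H). exists i. split; [lia | auto].
  - apply rst_refl.
  - apply rst_sym; auto.
  - eapply rst_trans; eauto.
Qed.

Lemma pihat_eq L j p q : pihat L j p = pihat L j q <-> Rj L j p q.
Proof.
  split.
  - intros E. assert (H : pihat L j q q) by apply rst_refl.
    rewrite <- E in H. exact H.
  - intros H. apply functional_extensionality. intros r. apply propositional_extensionality.
    unfold pihat. split; intros H'.
    + eapply rst_trans; [apply rst_sym; exact H | exact H'].
    + eapply rst_trans; [exact H | exact H'].
Qed.

Lemma pi_eq L j p q : pi L j (pihat L j p) = pi L j (pihat L j q) <-> Rj L (j + 1) p q.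
Proof.
  split.
  - intros E. assert (H : pi L j (pihat L j q) q).
    { exists q. split; apply rst_refl. }
    rewrite <- E in H. destruct H as (p' & H1 & H2).
    eapply rst_trans; [apply Rj_mono; exact H1 | exact H2].
  - intros H. apply functional_extensionality. intros r. apply propositional_extensionality.
    unfold pi, pihat. split; intros (p' & H1 & H2).
    + exists q. split; [apply rst_refl|].
      eapply rst_trans; [apply rst_sym; exact H|].
      eapply rst_trans; [apply Rj_mono; exact H1 | exact H2].
    + exists p. split; [apply rst_refl|].
      eapply rst_trans; [exact H|].
      eapply rst_trans; [apply Rj_mono; exact H1 | exact H2].
Qed.

Definition Pbar L j (x y : Xpt) : Prop :=
  x = y \/ exists p q, x = pihat L j p /\ y = pihat L j q /\ Rj L (j + 1) p q.

Lemma Rbar_inv L j x y : Rbar L j x y -> Pbar L j x y.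
Proof.
  induction 1 as [x y H | x | x y H IH | x y z H1 IH1 H2 IH2].
  - right. destruct H as (p & q & HR & -> & ->).
    exists (Phi L j p), (Phi L j q). split; [reflexivity|]. split; [reflexivity|].
    apply rst_step. exists j. split; [lia|]. exists p, q. auto.
  - left; reflexivity.
  - destruct IH as [-> | (p & q & -> & -> & H')]; [left; reflexivity|].
    right. exists q, p. split; [reflexivity|]. split; [reflexivity|]. apply rst_sym; auto.
  - destruct IH1 as [-> | (p & q & -> & -> & Ha)]; [exact IH2|].
    destruct IH2 as [<- | (q' & r & Eq & -> & Hb)].
    + right. exists p, q. auto.
    + right. exists p, r. split; [reflexivity|]. split; [reflexivity|].
      apply pihat_eq in Eq.
      eapply rst_trans; [exact Ha|]. eapply rst_trans; [apply Rj_mono; exact Eq | exact Hb].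
Qed.

Lemma part3 L j : forall p q : pt,
     Rbar L j (pihat L j p) (pihat L j q) <->
     pi L j (pihat L j p) = pi L j (pihat L j q).
Proof.
  intros p q. rewrite pi_eq. split.
  - intros H. apply Rbar_inv in H.
    destruct H as [E | (p' & q' & E1 & E2 & H)].
    + apply Rj_mono. apply pihat_eq; exact E.
    + apply pihat_eq in E1. apply pihat_eq in E2.
      eapply rst_trans; [apply Rj_mono; exact E1|].
      eapply rst_trans; [exact H | apply rst_sym; apply Rj_mono; exact E2].
  - induction 1 as [p q H | p | p q H IH | p q r H1 IH1 H2 IH2].
    + destruct H as (i & Hi & H).
      destruct (Z.eq_dec i j) as [-> | Hne].
      * destruct H as (p0 & q0 & HR & -> & ->). apply rst_step. exists p0, q0. auto.
      * replace (pihat L j q) with (pihat L j p); [apply rst_refl|].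
        apply pihat_eq. apply rst_step. exists i. split; [lia | auto].
    + apply rst_refl.
    + apply rst_sym; auto.
    + eapply rst_trans; eauto.
Qed.

Lemma EE u a a' x : 0 < u -> x = IZR a * u -> x = IZR a' * u -> a = a'.
Proof.
  intros Hu H1 H2. apply eq_IZR. apply Rmult_eq_reg_r with u; lra.
Qed.

Lemma lt_mulZ u a c : 0 < u -> IZR a * u < IZR c * u -> (a < c)%Z.
Proof. intros Hu H. apply lt_IZR. apply Rmult_lt_reg_r with u; auto. Qed.

Lemma EO u a a' x : 0 < u -> x = IZR a * u -> IZR a' * u < x < (IZR a' + 1) * u -> False.
Proof.
  intros Hu -> [H1 H2]. apply lt_mulZ in H1; auto.
  rewrite <- (plus_IZR a' 1) in H2. apply lt_mulZ in H2; auto. lia.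
Qed.

Lemma OO u a a' x : 0 < u -> IZR a * u < x < (IZR a + 1) * u ->
  IZR a' * u < x < (IZR a' + 1) * u -> a = a'.
Proof.
  intros Hu [H1 H2] [H3 H4]. rewrite <- (plus_IZR a 1) in H2. rewrite <- (plus_IZR a' 1) in H4.
  assert (A1 : IZR a * u < IZR (a' + 1) * u) by lra.
  assert (A2 : IZR a' * u < IZR (a + 1) * u) by lra.
  apply lt_mulZ in A1; auto. apply lt_mulZ in A2; auto. lia.
Qed.

Ltac solve_cells Hu Hv :=
  first
  [ exfalso; eapply EO; [apply Hu | eassumption | eassumption]
  | exfalso; eapply EO; [apply Hv | eassumption | eassumption]
  | f_equal; first [eapply EE; [apply Hu | eassumption | eassumption]
                   | eapply OO; [apply Hu | eassumption | eassumption]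
                   | eapply EE; [apply Hv | eassumption | eassumption]
                   | eapply OO; [apply Hv | eassumption | eassumption]]].

Lemma cell_uniq L (HL : (1 <= L)%nat) j s s' p :
  in_cell_interior L j s p -> in_cell_interior L j s' p -> s = s'.
Proof.
  pose proof (sv_pos L j HL) as Hv. pose proof (sh_pos j) as Hu.
  destruct s as [k a b], s' as [k' a' b'].
  unfold in_cell_interior; cbn [ck ca cb].
  destruct k, k'; intros [H1 H2] [H3 H4];
  try (exfalso; eapply EO; [apply Hu | apply H1 | apply H3]; fail);
  try (exfalso; eapply EO; [apply Hu | apply H3 | apply H1]; fail);
  try (exfalso; eapply EO; [apply Hv | apply H2 | apply H4]; fail);
  try (exfalso; eapply EO; [apply Hv | apply H4 | apply H2]; fail);
  f_equal;
  first [ eapply EE; [apply Hu | apply H1 | apply H3]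
        | eapply OO; [apply Hu | apply H1 | apply H3]
        | eapply EE; [apply Hv | apply H2 | apply H4]
        | eapply OO; [apply Hv | apply H2 | apply H4] ].
Qed.

Definition shiftc (s : cell) (B : Z) := mkCell (ck s) (ca s) (cb s + B).

Lemma int_shift L j s p B : in_cell_interior L j s p ->
  in_cell_interior L j (shiftc s B) (fst p, snd p + IZR B * sv L j).
Proof.
  destruct s as [k a b]; unfold in_cell_interior, shiftc; cbn [ck ca cb fst snd].
  rewrite plus_IZR. destruct k; intros H; lra.
Qed.

Lemma in_cell_shift L j s B q : in_cell L j (shiftc s B) q <->
  exists q0, in_cell L j s q0 /\ q = translate (IZR 0 * sh j, IZR B * sv L j) q0.
Proof.
  destruct s as [k a b]; unfold in_cell, shiftc, translate; cbn [ck ca cb fst snd].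
  rewrite plus_IZR. split.
  - intros H. exists (fst q, snd q - IZR B * sv L j). cbn [fst snd]. split.
    + destruct k; lra.
    + apply pt_eq; cbn [fst snd]; simpl; ring.
  - intros (q0 & H & ->). cbn [fst snd]. simpl. destruct k; lra.
Qed.

Lemma pair_eq0 (r : pt) w : (fst r, snd r + IZR 0 * w) = r.
Proof. apply pt_eq; cbn [fst snd]; simpl; ring. Qed.

Definition G L j (p q : pt) : Prop := exists i : Z, (i < j)%Z /\ PhiRel L i p q.

Lemma G_sym L j p q : G L j q p -> G L j p q.
Proof.
  intros (i & Hi & p0 & q0 & HR & -> & ->). exists i. split; auto.
  exists q0, p0. split; auto. apply rst_sym; auto.
Qed.

Lemma dummy : True. Proof. exact I. Qed.
Lemma gen_rel L k l i (r0 : pt) :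
  (1 <= L)%nat -> (1 <= i <= 3)%Z -> fst r0 = IZR k + IZR i / 4 ->
  IZR (3*l+i-1) <= mv L * snd r0 <= IZR (3*l+i-1) + 1 ->
  Rel L r0 (fst r0, snd r0 + / mv L).
Proof.
  intros HL Hi Hx Hy. pose proof (mv_pos L HL).
  apply rst_step. exists k, l, i. split; auto. split; [|reflexivity].
  split; auto. rewrite le_div_iff, div_le_iff by auto.
  replace (IZR (3 * l + i)) with (IZR (3*l+i-1) + 1) by (rewrite <- plus_IZR; f_equal; lia).
  lra.
Qed.

Lemma edge_step L (HL : (1 <= L)%nat) j p p' a b :
  G L j p p' -> in_cell_interior L j (mkCell CV a b) p ->
  exists B : Z, p' = (fst p, snd p + IZR B * sv L j) /\
    forall r, in_cell L j (mkCell CV a b) r -> Rj L j r (fst r, snd r + IZR B * sv L j).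
Proof.
  intros (i & Hij & p0 & p0' & HR & -> & ->) Hint.
  pose proof (sv_pos L j HL) as Hv. pose proof (sh_pos j) as Hu. pose proof (mv_pos L HL) as Hm.
  destruct (Rel_inv L HL _ _ HR) as [<- | (k & l & i' & Hi & Hx & Hx2 & Hp & Hq & d & Hd)].
  { exists 0%Z. split; [rewrite pair_eq0; reflexivity|]. intros r _. rewrite pair_eq0. apply rst_refl. }
  set (N := ((3 * Z.of_nat L) ^ (j - i - 1))%Z).
  assert (HN : 0 < IZR N).
  { apply IZR_lt. apply pow_pos_Z; lia. }
  assert (Hsv : sv L i = sv L j * mv L * IZR N) by (apply sv_split; auto).
  unfold in_cell_interior, Phi in Hint; cbn [ck ca cb fst snd] in Hint.
  destruct Hint as [Hxa Hyb].
  set (Y := mv L * snd p0) in *.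
  assert (E : sv L i * snd p0 = sv L j * (IZR N * Y)) by (unfold Y; rewrite Hsv; ring).
  rewrite E in Hyb.
  assert (Hb1 : IZR b < IZR N * Y) by nra.
  assert (Hb2 : IZR N * Y < IZR b + 1) by nra.
  set (c := (3 * l + i' - 1)%Z) in *.
  assert (Ec2 : IZR (3 * l + i' + 1) = IZR c + 2) by (unfold c; rewrite <- plus_IZR; f_equal; lia).
  rewrite Ec2 in Hp, Hq. rewrite Hd in Hq.
  assert (A1 : (N * c < b + 1)%Z).
  { apply lt_IZR. rewrite mult_IZR, plus_IZR. nra. }
  assert (A2 : (b < N * (c + 2))%Z).
  { apply lt_IZR. rewrite mult_IZR, plus_IZR. nra. }
  exists (N * d)%Z. split.
  { unfold Phi; apply pt_eq; cbn [fst snd]; [congruence|].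
    rewrite Hsv, mult_IZR.
    replace (sv L j * mv L * IZR N * snd p0') with (sv L j * IZR N * (mv L * snd p0')) by ring.
    rewrite Hd. unfold Y. ring. }
  intros r Hr. unfold in_cell in Hr; cbn [ck ca cb] in Hr. destruct Hr as [Hrx Hry].
  set (r0 := (fst p0, snd r / sv L i)).
  assert (Hsi : 0 < sv L i) by (apply sv_pos; auto).
  assert (ENr : IZR N * (mv L * snd r0) * sv L j = snd r).
  { unfold r0; cbn [snd]. rewrite Hsv. field. lra. }
  assert (Hr1 : IZR b <= IZR N * (mv L * snd r0)) by nra.
  assert (Hr2 : IZR N * (mv L * snd r0) <= IZR b + 1) by nra.
  assert (HP1 : Phi L i r0 = r).
  { unfold Phi, r0; apply pt_eq; cbn [fst snd]; [congruence | field; lra]. }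
  assert (HP2 : Phi L i (fst r0, snd r0 + IZR d / mv L) = (fst r, snd r + IZR (N * d) * sv L j)).
  { unfold Phi, r0; apply pt_eq; cbn [fst snd]; [congruence|].
    rewrite mult_IZR.
    replace (sv L i * (snd r / sv L i + IZR d / mv L)) with (snd r + sv L i * IZR d / mv L) by (field; lra).
    rewrite Hsv. field. lra. }
  assert (HRel : Rel L r0 (fst r0, snd r0 + IZR d / mv L)).
  { assert (Hx0 : fst r0 = IZR k + IZR i' / 4) by (unfold r0; cbn [fst]; exact Hx).
    destruct (Z_le_gt_dec (b + 1) (N * (c + 1))) as [C1 | C2].
    - assert (Hc1 : IZR (b + 1) <= IZR (N * (c + 1))) by (apply IZR_le; lia).
      assert (Hc0 : IZR (N * c) <= IZR b) by (apply IZR_le; lia).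
      rewrite mult_IZR, !plus_IZR in Hc1. rewrite mult_IZR in Hc0.
      assert (Y < IZR c + 1) by nra. assert (IZR c < Y) by nra.
      assert (IZR c <= mv L * snd r0 <= IZR c + 1) by nra.
      assert (Hd0 : (d = 0 \/ d = 1)%Z).
      { assert (-1 < IZR d) by lra. assert (IZR d < 2) by lra.
        apply lt_IZR in H2. apply lt_IZR in H3. lia. }
      destruct Hd0 as [-> | ->].
      + replace (fst r0, snd r0 + IZR 0 / mv L) with r0 by (apply pt_eq; cbn [fst snd]; simpl; field; lra).
        apply rst_refl.
      + replace (fst r0, snd r0 + IZR 1 / mv L) with (fst r0, snd r0 + / mv L)
          by (apply pt_eq; cbn [fst snd]; simpl; field; lra).
        eapply gen_rel; eauto.
    - assert (Hc1 : IZR (N * (c + 1)) <= IZR b) by (apply IZR_le; lia).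
      assert (Hc0 : IZR (b + 1) <= IZR (N * (c + 2))) by (apply IZR_le; lia).
      rewrite mult_IZR, !plus_IZR in Hc1, Hc0.
      rewrite plus_IZR in Hc0.
      assert (IZR c + 1 < Y) by (apply (Rmult_lt_reg_l (IZR N)); lra).
      assert (Y < IZR c + 2) by (apply (Rmult_lt_reg_l (IZR N)); lra).
      assert (IZR c + 1 <= mv L * snd r0 <= IZR c + 2) by
        (split; apply (Rmult_le_reg_l (IZR N)); lra).
      assert (Hd0 : (d = 0 \/ d = -1)%Z).
      { assert (-2 < IZR d) by lra. assert (IZR d < 1) by lra.
        apply lt_IZR in H2. apply lt_IZR in H3. lia. }
      destruct Hd0 as [-> | ->].
      + replace (fst r0, snd r0 + IZR 0 / mv L) with r0 by (apply pt_eq; cbn [fst snd]; simpl; field; lra).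
        apply rst_refl.
      + set (w := (fst r0, snd r0 + IZR (-1) / mv L)).
        apply rst_sym.
        assert (Ew : r0 = (fst w, snd w + / mv L))
          by (apply pt_eq; unfold w; cbn [fst snd]; simpl; field; lra).
        cut (Rel L w (fst w, snd w + / mv L)); [intros H2; rewrite <- Ew in H2; exact H2|].
        eapply gen_rel with (k := k) (l := l) (i := i'); eauto.
        unfold w; cbn [fst snd].
        replace (mv L * (snd r0 + IZR (-1) / mv L)) with (mv L * snd r0 - 1) by (simpl; field; lra).
        fold c. lra. }
  rewrite <- HP1 at 1. rewrite <- HP2.
  apply rst_step. exists i. split; auto. exists r0, (fst r0, snd r0 + IZR d / mv L).
  split; auto.
Qed.

Lemma edge_chain L (HL : (1 <= L)%nat) j p q :
  clos_refl_sym_trans_1n pt (G L j) p q -> forall a b,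
  in_cell_interior L j (mkCell CV a b) p ->
  exists B : Z, q = (fst p, snd p + IZR B * sv L j) /\
    forall r, in_cell L j (mkCell CV a b) r -> Rj L j r (fst r, snd r + IZR B * sv L j).
Proof.
  induction 1 as [x | x y z Hxy Hyz IH]; intros a b Hint.
  - exists 0%Z. split; [rewrite pair_eq0; reflexivity|]. intros r _. rewrite pair_eq0. apply rst_refl.
  - assert (Hg : G L j x y) by (destruct Hxy; [auto | apply G_sym; auto]).
    destruct (edge_step L HL j x y a b Hg Hint) as (B1 & Ey & Hr1).
    assert (Hint' : in_cell_interior L j (mkCell CV a (b + B1)) y).
    { rewrite Ey. apply (int_shift L j (mkCell CV a b) x B1 Hint). }
    destruct (IH a (b + B1)%Z Hint') as (B2 & Ez & Hr2).
    exists (B1 + B2)%Z. split.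
    + rewrite Ez, Ey. apply pt_eq; cbn [fst snd]; [reflexivity|]. rewrite plus_IZR. ring.
    + intros r Hr. eapply rst_trans; [apply Hr1; exact Hr|].
      replace (fst r, snd r + IZR (B1 + B2) * sv L j) with
        (fst (fst r, snd r + IZR B1 * sv L j), snd (fst r, snd r + IZR B1 * sv L j) + IZR B2 * sv L j)
        by (apply pt_eq; cbn [fst snd]; [reflexivity | rewrite plus_IZR; ring]).
      apply Hr2.
      apply (proj2 (in_cell_shift L j (mkCell CV a b) B1 _)).
      exists r. split; auto. unfold translate. apply pt_eq; cbn [fst snd]; simpl; ring.
Qed.

Lemma part4 L (HL : (1 <= L)%nat) j : forall (s0 s1 : cell) (p0 p1 : pt),
     in_cell_interior L j s0 p0 -> in_cell_interior L j s1 p1 ->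
     Rj L j p0 p1 ->
     exists a b : Z,
       let t := (IZR a * sh j, IZR b * sv L j) in
       (forall q, in_cell L j s1 q <-> exists q0, in_cell L j s0 q0 /\ q = translate t q0) /\
       (forall q, in_cell L j s0 q -> Rj L j q (translate t q)).
Proof.
  intros s0 s1 p0 p1 H0 H1 HR.
  pose proof (sv_pos L j HL) as Hv. pose proof (sh_pos j) as Hu.
  assert (K : exists B : Z, p1 = (fst p0, snd p0 + IZR B * sv L j) /\
    forall q, in_cell L j s0 q -> Rj L j q (fst q, snd q + IZR B * sv L j)).
  { destruct (Rj_inv L HL j p0 p1 HR) as (Hx & (B & HB) & Ho).
    destruct s0 as [k a b]. destruct k.
    - exists B. split; [apply pt_eq; auto|].
      intros q Hq. unfold in_cell, in_cell_interior in *; cbn [ck ca cb] in *.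
      assert (q = p0) as -> by (apply pt_eq; lra).
      replace (fst p0, snd p0 + IZR B * sv L j) with p1 by (apply pt_eq; auto). exact HR.
    - destruct Ho as [-> | (a' & Ha')].
      + exists 0%Z. split; [rewrite pair_eq0; reflexivity|]. intros r _. rewrite pair_eq0. apply rst_refl.
      + exfalso. unfold in_cell_interior in H0; cbn [ck ca cb] in H0. destruct H0 as [H0 _].
        eapply EO; [apply Hu | apply Ha' | apply H0].
    - apply (edge_chain L HL j p0 p1); auto. apply clos_rst_rst1n. exact HR.
    - destruct Ho as [-> | (a' & Ha')].
      + exists 0%Z. split; [rewrite pair_eq0; reflexivity|]. intros r _. rewrite pair_eq0. apply rst_refl.
      + exfalso. unfold in_cell_interior in H0; cbn [ck ca cb] in H0. destruct H0 as [H0 _].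
        eapply EO; [apply Hu | apply Ha' | apply H0]. }
  destruct K as (B & E1 & HK).
  assert (Es : s1 = shiftc s0 B).
  { apply (cell_uniq L HL j s1 (shiftc s0 B) p1); auto. rewrite E1. apply int_shift; auto. }
  exists 0%Z, B. cbv zeta. split.
  - intros q. rewrite Es. apply in_cell_shift.
  - intros q Hq. unfold translate. cbn [fst snd].
    replace (fst q + IZR 0 * sh j) with (fst q) by (simpl; ring). apply HK; auto.
Qed.

Theorem mainTheorem2 (L : nat) (HL : (100 <= L)%nat) (j : Z) :
  (* (1) *)
  (forall p q : pt, PhiRel L (j - 1) p q -> p <> q ->
     x_cond j (fst p) /\
     exists (a : Z) (f : nat -> Z) (n : nat), (n <= 2)%nat /\ vpath f n /\
       on_vpath L j a f n p /\ on_vpath L j a f n q) /\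
  (* (2) *)
  (forall p q : pt, Rj L j p q ->
     exists a b : Z, q = translate (IZR a * sh j, IZR b * sv L j) p) /\
  (* (3) *)
  (forall p q : pt,
     Rbar L j (pihat L j p) (pihat L j q) <->
     pi L j (pihat L j p) = pi L j (pihat L j q)) /\
  (* (4) *)
  (forall (s0 s1 : cell) (p0 p1 : pt),
     in_cell_interior L j s0 p0 -> in_cell_interior L j s1 p1 ->
     Rj L j p0 p1 ->
     exists a b : Z,
       let t := (IZR a * sh j, IZR b * sv L j) in
       (forall q, in_cell L j s1 q <-> exists q0, in_cell L j s0 q0 /\ q = translate t q0) /\
       (forall q, in_cell L j s0 q -> Rj L j q (translate t q))).
Proof.
  assert (HL1 : (1 <= L)%nat) by lia.
  split; [apply part1; auto|]. split; [apply part2; auto|]. split; [apply part3|]. apply part4; auto.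
Qed.
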